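(* Let $(A,\mathfrak{m})$ be a local ring that is the colimit of a directed system $(A_n,\mathfrak{m}_n)_{n\ge0}$ of local rings (with local transition homomorphisms). If $(A_n,\mathfrak{m}_n)$ is regular for all $n\gg0$, then $(A,\mathfrak{m})$ is regular.
   Context: A local ring $(R,\mathfrak{m})$ (not necessarily Noetherian) is regular if the natural surjection $\operatorname{Sym}_{R/\mathfrak{m}}(\mathfrak{m}/\mathfrak{m}^2)\to\bigoplus_{d\ge0}\mathfrak{m}^d/\mathfrak{m}^{d+1}$ is an isomorphism. *)

(* Defs.v *)
From HB Require Import structures.
From mathcomp Require Import all_boot all_order all_algebra.
From mathcomp Require Import mpoly.
Set Implicit Arguments. Unset Strict Implicit. Unset Printing Implicit Defensive.
Import Order.TTheory GRing.Theory.
Local Open Scope ring_scope.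

(* Non-units of a commutative ring. In a local ring these form the maximal ideal. *)
Definition nonunit (R : comUnitRingType) (x : R) : Prop := x \isn't a GRing.unit.

Definition is_local (R : comUnitRingType) : Prop :=
  (1 : R) != 0 /\ forall x y : R, nonunit x -> nonunit y -> nonunit (x + y).

Definition local_hom (R S : comUnitRingType) (f : R -> S) : Prop :=
  forall x, nonunit x -> nonunit (f x).

Fixpoint mpow (R : comUnitRingType) (d : nat) : R -> Prop :=
  match d with
  | 0 => fun _ => True
  | d'.+1 => fun x => exists (k : nat) (a b : 'I_k -> R),
        (forall j, mpow d' (a j) /\ nonunit (b j)) /\ x = \sum_(j < k) a j * b j
  end.

(* Regularity of a local ring (R, m) with residue field k = R/m:
   the natural graded surjection Sym_k(m/m^2) -> gr_m(R) = (+)_d m^d/m^(d+1)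
   is injective (hence an isomorphism).  Unfolded elementwise: Sym_k(m/m^2)
   is the polynomial algebra over k on symbols [x] (x in m) modulo the linear
   relations sum_i a_i [x_i] = 0 whenever sum_i a_i x_i in m^2.  Every element
   of Sym^d is represented, for some finite family x_1..x_r in m, by a homogeneous
   F in R[X_1..X_r] of degree d (coefficients read mod m); its image in
   m^d/m^(d+1) is the class of F(x_1,..,x_r).  Injectivity says: if F(x) lies in
   m^(d+1) then the class of F in Sym^d vanishes, i.e. F lies in the kernel of
   R[X] -> k[X] -> Sym_k(m/m^2), X_i |-> [x_i], which is the ideal
   m R[X] + ( sum_i a_i X_i : sum_i a_i x_i in m^2 ). *)
Definition regular_local (R : comUnitRingType) : Prop :=
  forall (r d : nat) (x : 'I_r -> R) (F : {mpoly R[r]}),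
    (forall i, nonunit (x i)) ->
    F \is d.-homog ->
    mpow d.+1 F.@[x] ->
    exists (P : {mpoly R[r]}) (k : nat) (G : 'I_k -> {mpoly R[r]}) (a : 'I_k -> 'I_r -> R),
      (forall mon, nonunit (P@_mon)) /\
      (forall j, mpow 2 (\sum_(i < r) a j i * x i)) /\
      F = P + \sum_(j < k) G j * (\sum_(i < r) a j i *: 'X_i).

Fixpoint trans (A : nat -> comUnitRingType) (f : forall n, A n -> A n.+1)
  (n k : nat) : A n -> A (k + n)%N :=
  match k return A n -> A (k + n)%N with
  | 0 => fun a => a
  | k'.+1 => fun a => f (k' + n)%N (@trans A f n k' a)
  end.

(* (B, g) is the colimit of the directed system (A_n, f_n)_n of rings:
   g_n : A_n -> B compatible with the f_n, every element of B comes from some A_n,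
   and g_n a = 0 iff a becomes 0 in some A_(k+n)  (standard description of a
   filtered colimit of rings). *)
Definition is_colimit (A : nat -> comUnitRingType)
  (f : forall n, {rmorphism A n -> A n.+1}) (B : comUnitRingType)
  (g : forall n, {rmorphism A n -> B}) : Prop :=
  [/\ forall n (a : A n), g n.+1 (f n a) = g n a,
      forall b : B, exists n (a : A n), g n a = b &
      forall n (a : A n), g n a = 0 -> exists k, @trans A (fun m => f m : A m -> A m.+1) n k a = 0].

(* Main.v *)
Require Import Defs.
From HB Require Import structures.
From mathcomp Require Import all_boot all_order all_algebra.
From mathcomp Require Import mpoly.
From Stdlib Require Import ClassicalEpsilon.
Set Implicit Arguments. Unset Strict Implicit. Unset Printing Implicit Defensive.
Import GRing.Theory.
Local Open Scope ring_scope.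

Lemma nonunit_rmorph (R S : comUnitRingType) (h : {rmorphism R -> S}) x :
  nonunit (h x) -> nonunit x.
Proof. by rewrite /nonunit; apply: contra; apply: rmorph_unit. Qed.

Lemma mpow_map (R S : comUnitRingType) (h : {rmorphism R -> S}) :
  local_hom h -> forall d x, mpow d x -> mpow d (h x).
Proof.
move=> hl; elim=> [//|d IH] x /= [k [a [b [Hab ->]]]].
exists k, (fun j => h (a j)), (fun j => h (b j)); split.
  by move=> j; case: (Hab j) => H1 H2; split; [apply: IH | apply: hl].
by rewrite rmorph_sum; apply: eq_bigr => j _; rewrite rmorphM.
Qed.

Lemma choice_fun (X Y : Type) (P : X -> Y -> Prop) :
  (forall x, exists y, P x y) -> exists fn : X -> Y, forall x, P x (fn x).
Proof.
move=> H; exists (fun x => proj1_sig (constructive_indefinite_description _ (H x))).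
by move=> x; case: (constructive_indefinite_description _ (H x)).
Qed.

Lemma meval_sumX (R : comUnitRingType) (r : nat) (s : seq 'X_{1..r}) (c : 'X_{1..r} -> R) v :
  (\sum_(m <- s) c m *: 'X_[m]).@[v] = \sum_(m <- s) c m * \prod_i v i ^+ m i.
Proof.
rewrite (big_morph (meval v) (mevalD v) (meval0 v)).
by apply: eq_bigr => m _; rewrite mevalZ mevalX.
Qed.

Lemma homog_sumX (R : comUnitRingType) (r d : nat) (s : seq 'X_{1..r}) (c : 'X_{1..r} -> R) :
  (forall m, m \in s -> mdeg m = d) ->
  (\sum_(m <- s) c m *: 'X_[m]) \is d.-homog.
Proof.
move=> H; rewrite big_seq; apply: rpred_sum => m /H Hm.
by apply: dhomogZ; rewrite dhomogX; apply/eqP; exact: Hm.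
Qed.

Lemma transfer (R S : comUnitRingType) (h : {rmorphism R -> S}) (hl : local_hom h)
  (hreg : regular_local R) (r d : nat) (x' : 'I_r -> R) (x : 'I_r -> S)
  (F' : {mpoly R[r]}) (F : {mpoly S[r]}) :
  (forall i, h (x' i) = x i) -> map_mpoly h F' = F ->
  (forall i, nonunit (x' i)) -> F' \is d.-homog -> mpow d.+1 F'.@[x'] ->
    exists (P : {mpoly S[r]}) (k : nat) (G : 'I_k -> {mpoly S[r]}) (a : 'I_k -> 'I_r -> S),
      (forall mon, nonunit (P@_mon)) /\
      (forall j, mpow 2 (\sum_(i < r) a j i * x i)) /\
      F = P + \sum_(j < k) G j * (\sum_(i < r) a j i *: 'X_i).
Proof.
move=> hx hF hx' hh hp.
have [P' [k [G' [a' [H1 [H2 H3]]]]]] := hreg r d x' F' hx' hh hp.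
exists (map_mpoly h P'), k, (fun j => map_mpoly h (G' j)), (fun j i => h (a' j i)).
split; [|split].
- by move=> mon; rewrite mcoeff_map_mpoly; apply: hl.
- move=> j; have := mpow_map hl (H2 j).
  by rewrite rmorph_sum => E; under eq_bigr do rewrite -hx -rmorphM.
- rewrite -hF H3 rmorphD rmorph_sum; congr (_ + _); apply: eq_bigr => j _.
  rewrite rmorphM rmorph_sum; congr (_ * _); apply: eq_bigr => i _.
  by rewrite /= map_mpolyZ map_mpolyX.
Qed.
Fixpoint transR (A : nat -> comUnitRingType) (f : forall n, {rmorphism A n -> A n.+1})
  (n k : nat) : {rmorphism A n -> A (k + n)%N} :=
  match k return {rmorphism A n -> A (k + n)%N} with
  | 0 => idfun
  | k'.+1 => (f (k' + n)%N \o transR f n k')%FUN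
  end.

Lemma transRE A f n k a : @transR A f n k a = @trans A (fun m => f m : A m -> A m.+1) n k a.
Proof. by elim: k => //= k ->. Qed.

Lemma g_trans (A : nat -> comUnitRingType) (f : forall n, {rmorphism A n -> A n.+1}) (B : comUnitRingType) (g : forall n, {rmorphism A n -> B})
  (hc1 : forall n (a : A n), g n.+1 (f n a) = g n a) n k a :
  g (k + n)%N (@transR A f n k a) = g n a.
Proof. by elim: k => //= k IH; rewrite hc1 IH. Qed.

Lemma transR_local (A : nat -> comUnitRingType) (f : forall n, {rmorphism A n -> A n.+1}) (hfloc : forall n, local_hom (f n)) n k :
  local_hom (@transR A f n k).
Proof. by elim: k => //= k IH a Ha; apply: hfloc; apply: IH. Qed.

Definition Ev (P : nat -> Prop) := exists n0, forall m, (n0 <= m)%N -> P m.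

Lemma Ev_and P Q : Ev P -> Ev Q -> Ev (fun m => P m /\ Q m).
Proof.
move=> [n1 H1] [n2 H2]; exists (maxn n1 n2) => m Hm; split.
  by apply: H1; apply: leq_trans Hm; apply: leq_maxl.
by apply: H2; apply: leq_trans Hm; apply: leq_maxr.
Qed.

Lemma Ev_seq (T : eqType) (s : seq T) (P : T -> nat -> Prop) :
  (forall t, t \in s -> Ev (P t)) -> Ev (fun m => forall t, t \in s -> P t m).
Proof.
elim: s => [|t s IH] H; first by exists 0%N.
have H1 : Ev (P t) by apply: H; rewrite mem_head.
have H2 := IH (fun u (hu : u \in s) => H u (@mem_behead _ (t :: s) u hu)).
have [n0 Hn] := Ev_and H1 H2; exists n0 => m Hm u.
rewrite in_cons => /orP [/eqP -> | hu]; first by case: (Hn m Hm).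
by case: (Hn m Hm) => _; apply.
Qed.

Lemma Ev_ord k (P : 'I_k -> nat -> Prop) :
  (forall j, Ev (P j)) -> Ev (fun m => forall j, P j m).
Proof.
move=> H; have [n0 Hn] := @Ev_seq _ (enum 'I_k) P (fun t _ => H t).
by exists n0 => m Hm j; apply: Hn => //; rewrite mem_enum.
Qed.

Lemma lift1 (A : nat -> comUnitRingType) (f : forall n, {rmorphism A n -> A n.+1}) (B : comUnitRingType) (g : forall n, {rmorphism A n -> B})
  (hc1 : forall n (a : A n), g n.+1 (f n a) = g n a) (b : B) :
  (exists n (a : A n), g n a = b) -> Ev (fun m => exists a : A m, g m a = b).
Proof.
move=> [n [a Ha]]; exists n => m Hm.
have [k ->] : exists k, m = (k + n)%N by exists (m - n)%N; rewrite subnK.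
by exists (@transR A f n k a); rewrite g_trans.
Qed.

Lemma g_local (A : nat -> comUnitRingType) (f : forall n, {rmorphism A n -> A n.+1})
  (B : comUnitRingType) (g : forall n, {rmorphism A n -> B})
  (hfloc : forall n, local_hom (f n)) (hcolim : is_colimit f g) n :
  local_hom (g n).
Proof.
case: hcolim => hc1 hc2 hc3 a Ha; apply/negP => Hu.
have [n0 Hn0] := lift1 hc1 (hc2 (g n a)^-1).
have [c Hc] := Hn0 (n0 + n)%N (leq_addr _ _).
pose a2 := @transR A f n n0 a.
have H0 : g (n0 + n)%N (a2 * c - 1) = 0.
  by rewrite rmorphB rmorphM rmorph1 Hc /a2 (g_trans hc1) divrr // subrr.
have [j Hj] := hc3 _ _ H0.
move: Hj; rewrite -transRE rmorphB rmorphM rmorph1 => /eqP; rewrite subr_eq0 => /eqP Hj.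
have : nonunit (transR f (n0 + n) j a2) by apply: transR_local => //; apply: transR_local.
by rewrite /nonunit; apply/negP/negPn/unitrPr; exists (transR f (n0 + n) j c).
Qed.

Lemma lift_mpow (A : nat -> comUnitRingType) (f : forall n, {rmorphism A n -> A n.+1})
  (B : comUnitRingType) (g : forall n, {rmorphism A n -> B})
  (hcolim : is_colimit f g) d (b : B) :
  mpow d b -> Ev (fun m => exists a : A m, g m a = b /\ mpow d a).
Proof.
case: hcolim => hc1 hc2 hc3.
elim: d b => [|d IH] b /=.
  move=> _; have [n0 Hn] := lift1 hc1 (hc2 b).
  by exists n0 => m Hm; have [a Ha] := Hn m Hm; exists a.
move=> [k [a [bb [Hab ->]]]].
have HE : Ev (fun m => forall j : 'I_k, (exists a' : A m, g m a' = a j /\ mpow d a') /\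
                                    (exists b' : A m, g m b' = bb j)).
  apply: Ev_ord => j; apply: Ev_and; first by apply: IH; case: (Hab j).
  exact: (lift1 hc1 (hc2 (bb j))).
have [n0 Hn] := HE; exists n0 => m Hm.
have [fa Hfa] := fin_all_exists (fun j => proj1 (Hn m Hm j)).
have [fb Hfb] := fin_all_exists (fun j => proj2 (Hn m Hm j)).
exists (\sum_(j < k) fa j * fb j); split.
  by rewrite rmorph_sum; apply: eq_bigr => j _; rewrite rmorphM Hfb; case: (Hfa j) => -> _.
exists k, fa, fb; split => // j; split; first by case: (Hfa j).
by apply: (@nonunit_rmorph _ _ (g m)); rewrite Hfb; case: (Hab j).
Qed.

Unset Implicit Arguments.
Set Strict Implicit.

Theorem lemma3p14
  (A : nat -> comUnitRingType)
  (f : forall n, {rmorphism A n -> A n.+1})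
  (B : comUnitRingType)
  (g : forall n, {rmorphism A n -> B})
  (hAloc : forall n, is_local (A n))
  (hfloc : forall n, local_hom (f n))
  (hBloc : is_local B)
  (hcolim : is_colimit f g)
  (hreg : exists N, forall n, (N <= n)%N -> regular_local (A n)) :
  regular_local B.
Proof.
move=> r d x F hx hF hp.
have hcol := hcolim; case: hcol => hc1 hc2 hc3.
case: hreg => N hN.
have E1 : Ev (fun m => forall i : 'I_r, exists a : A m, g m a = x i).
  by apply: Ev_ord => i; exact: (lift1 hc1 (hc2 (x i))).
have E2 : Ev (fun m => forall mon, mon \in msupp F -> exists c : A m, g m c = F@_mon).
  by apply: Ev_seq => mon _; exact: (lift1 hc1 (hc2 _)).
have E3 := lift_mpow hcolim hp.
have E4 : Ev (fun m => (N <= m)%N) by exists N.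
have [m Hm] := Ev_and (Ev_and E1 E2) (Ev_and E3 E4).
have [[H1 H2] [[w [Hw1 Hw2]] HNm]] := Hm m (leqnn m).
have [x' Hx'] := fin_all_exists H1.
have [c Hc] : exists c : 'X_{1..r} -> A m, forall mon, mon \in msupp F -> g m (c mon) = F@_mon.
  apply: (@choice_fun _ _ (fun mon c => mon \in msupp F -> g m c = F@_mon)).
  move=> mon; case: (boolP (mon \in msupp F)) => hm.
    by have [c Hc] := H2 mon hm; exists c.
  by exists 0.
pose Fm := \sum_(mon <- msupp F) c mon *: 'X_[mon].
have HFm : g m Fm.@[x'] = F.@[x].
  rewrite /Fm meval_sumX {2}(mpolyE F) meval_sumX rmorph_sum.
  rewrite big_seq [RHS]big_seq; apply: eq_bigr => mon hm.
  rewrite rmorphM rmorph_prod Hc //; congr (_ * _); apply: eq_bigr => i _.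
  by rewrite rmorphXn Hx'.
have H0 : g m (Fm.@[x'] - w) = 0 by rewrite rmorphB HFm Hw1 subrr.
have [j Hj] := hc3 _ _ H0.
move: Hj; rewrite -transRE rmorphB => /eqP; rewrite subr_eq0 => /eqP Hj.
pose T := transR f m j.
have hgl := g_local hfloc hcolim.
have Hp : (N <= j + m)%N by apply: leq_trans HNm (leq_addl _ _).
pose x'' := fun i => T (x' i).
pose F'' := \sum_(mon <- msupp F) T (c mon) *: 'X_[mon].
apply: (@transfer _ _ (g (j + m)%N) (hgl _) (hN _ Hp) r d x'' x F'' F).
- by move=> i; rewrite /x'' /T (g_trans hc1).
- rewrite /F'' rmorph_sum {2}(mpolyE F) big_seq [RHS]big_seq.
  apply: eq_bigr => mon hm /=.
  by rewrite map_mpolyZ map_mpolyX /T (g_trans hc1) Hc.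
- move=> i; apply: (@nonunit_rmorph _ _ (g (j + m)%N)).
  by rewrite /x'' /T (g_trans hc1) Hx'.
- by apply: homog_sumX => mon hm; apply: (dhomog_mf hF).
- have -> : F''.@[x''] = T Fm.@[x'].
    rewrite /F'' /Fm !meval_sumX rmorph_sum; apply: eq_bigr => mon _.
    rewrite rmorphM rmorph_prod; congr (_ * _); apply: eq_bigr => i _.
    by rewrite rmorphXn.
  rewrite Hj; apply: mpow_map => //; exact: transR_local.
Qed.
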